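(* Let $\varrho=(\varrho_m)_{1\le m\le n-1}$ and $\sigma=(\sigma_m)_{1\le m\le n-1}$ be two independent uniformly random permutations of $\{1,\dots,n-1\}$. Then $(U_1,\dots,U_{n-1})$ is equal in distribution to the process \[ \Bigl(\#\{1\le m\le n-1:\varrho_m<k<\sigma_m\}+1\Bigr)_{1\le k\le n-1}. \]
   Context: Urn process: let $n\ge2$. An urn initially contains $n$ black balls. It is emptied in $n$ steps: in each of the first $n-1$ steps a uniformly random pair of balls is removed from the urn and replaced by one red ball; in step $n$ the last remaining ball is removed. $U_k$ is the number of red balls in the urn after $k$ steps, $0\le k\le n$. *)

(* Defs.v *)
From HB Require Import structures.
From mathcomp Require Import all_boot all_order all_algebra all_fingroup.
Set Implicit Arguments. Unset Strict Implicit. Unset Printing Implicit Defensive.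
Import Order.TTheory GRing.Theory Num.Theory.

(* One step of the urn: the urn holds N balls, r of them red (N - r black).
   A uniformly random pair among the 'C(N,2) pairs is removed and replaced by
   one red ball.  If j red balls are removed, the new red count is r - j + 1.
   urn_step N r r' = probability that the new red count is r'. *)
Definition urn_step (N r r' : nat) : rat :=
  if (r' <= r.+1) && (r.+1 - r' <= 2) then
    (('C(r, r.+1 - r') * 'C(N - r, 2 - (r.+1 - r')))%:R / ('C(N, 2))%:R)%R
  else 0%R.

Fixpoint urn_path_prob (N r : nat) (s : seq nat) : rat :=
  match s with
  | [::] => 1%R
  | r' :: s' => (urn_step N r r' * urn_path_prob N.-1 r' s')%R
  end.

(* Law of (U_1, ..., U_{n-1}): P(U_k = u_k for 1 <= k <= n-1), where u is
   indexed by i : 'I_(n-1) standing for k = i+1.  Initially n black balls. *)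
Definition urn_law (n : nat) (u : 'I_(n.-1) -> nat) : rat :=
  urn_path_prob n 0 [seq u i | i <- enum 'I_(n.-1)].

(* Law of the permutation process: (rho, sigma) uniform on pairs of
   permutations of {1,...,n-1} (encoded as 'I_(n-1), value v <-> v+1);
   probability that for every k = i+1, #{m : rho_m < k < sigma_m} + 1 = u_k. *)
Definition perm_law (n : nat) (u : 'I_(n.-1) -> nat) : rat :=
  ((#|[pred p : {perm 'I_(n.-1)} * {perm 'I_(n.-1)} |
        [forall i : 'I_(n.-1),
          #|[pred m : 'I_(n.-1) |
              ((p.1 m).+1 < i.+1 < (p.2 m).+1)%N]| + 1 == u i]]|)%:R
   / (#|{: {perm 'I_(n.-1)} * {perm 'I_(n.-1)}}|)%:R)%R.

Arguments urn_law n u : clear implicits.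
Arguments perm_law n u : clear implicits.

(* Main.v *)
Require Import Defs.
From HB Require Import structures.
From mathcomp Require Import all_boot all_order all_algebra all_fingroup.
From Stdlib Require Import Lia.
Set Implicit Arguments. Unset Strict Implicit. Unset Printing Implicit Defensive.
Import GRing.Theory Num.Theory.

Lemma two_bin2 n : 2 * 'C(n, 2) = n.-1 * n.
Proof. by rewrite (mul_bin_left n 1) bin1 subn1. Qed.

Lemma id1 x L : x.+1 * ('C(L,x.+1) * L.+1`!) * 'C(L.+2,2) =
   'C(L.+1,x) * L.+2`! * ('C(x.+1, 0) * 'C(L.+2 - x.+1, 2 - 0)).
Proof.
rewrite bin0 mul1n subn0 subSS [L.+2`!]factS.
case: (leqP x L) => [hxL|hx]; last first.
  rewrite (bin_small (leqW hx)).
  case: (ltngtP x L.+1) => [h|h|->]; first by move: h; rewrite ltnS leqNgt hx.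
    by rewrite (bin_small h) !(mul0n, muln0).
  by rewrite subnn (@bin_small 0 2) // !muln0.
have [k ->] : exists k, L = x + k by exists (L - x); rewrite subnKC.
have h1 := mul_bin_left (x+k).+1 x.
have h2 := mul_bin_down (x+k).+1 x.+1.
have h3 := two_bin2 (x+k).+2.
have h4 := two_bin2 k.+1.
rewrite subSS addKn in h2. rewrite subSn ?leq_addr // addKn in h1.
rewrite subSn ?leq_addr // addKn.
apply/eqP; rewrite -(eqn_pmul2l (_ : 0 < 2)) //; apply/eqP.
move: h1 h2 h3 h4 => /=.
set A := 'C(_, x.+1); set B := 'C(_,x); set D := 'C(x+k, x.+1).
set E := 'C(_,2); set F := 'C(k.+1,2); set G := (x+k).+1`!.
move=> h1 h2 h3 h4.
have H1 := congr1 (fun z => z * (x.+1 * D * G)) h3.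
have H2 := congr1 (fun z => z * ((x+k).+2 * G * x.+1)) h2.
have H3 := congr1 (fun z => z * ((x+k).+2 * G * k)) h1.
have H4 := congr1 (fun z => z * (B * ((x+k).+2 * G))) h4.
rewrite -!multE -!plusE in H1 H2 H3 H4 *. lia.
Qed.

Lemma id2 x L : x.+1 * 2 * ('C(L,x) * L.+1`!) * 'C(L.+2,2) =
   'C(L.+1,x) * L.+2`! * ('C(x.+1, 1) * 'C(L.+2 - x.+1, 2 - 1)).
Proof.
rewrite !bin1 subSS [L.+2`!]factS.
case: (leqP x L) => [hxL|hx]; last first.
  rewrite (bin_small hx).
  case: (ltngtP x L.+1) => [h|h|->]; first by move: h; rewrite ltnS leqNgt hx.
    by rewrite (bin_small h) !(mul0n, muln0).
  by rewrite subnn !(mul0n, muln0).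
have [k ->] : exists k, L = x + k by exists (L - x); rewrite subnKC.
have h2 := mul_bin_down (x+k).+1 x.
have h3 := two_bin2 (x+k).+2.
rewrite subSn ?leq_addr // addKn in h2.
rewrite subSn ?leq_addr // addKn.
move: h2 h3 => /=.
set B := 'C(_,x); set D := 'C(x+k, x).
set E := 'C(_,2); set G := (x+k).+1`!.
move=> h2 h3.
have H1 := congr1 (fun z => z * (x.+1 * D * G)) h3.
have H2 := congr1 (fun z => z * ((x+k).+2 * G * x.+1)) h2.
rewrite -!multE -!plusE in H1 H2 *. lia.
Qed.

Lemma id3 y L : y.+2 * ('C(L,y) * L.+1`!) * 'C(L.+2,2) =
   'C(L.+1,y.+1) * L.+2`! * ('C(y.+2, 2) * 'C(L.+2 - y.+2, 2 - 2)).
Proof.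
rewrite subnn bin0 muln1 [L.+2`!]factS.
have h2 := mul_bin_diag L.+1 y.
have h3 := two_bin2 L.+2.
have h4 := two_bin2 y.+2.
apply/eqP; rewrite -(eqn_pmul2l (_ : 0 < 2)) //; apply/eqP.
move: h2 h3 h4 => /=.
set B := 'C(_,y.+1); set D := 'C(L, y).
set E := 'C(L.+2,2); set F := 'C(y.+2,2); set G := L.+1`!.
move=> h2 h3 h4.
have H1 := congr1 (fun z => z * (y.+2 * D * G)) h3.
have H2 := congr1 (fun z => z * (L.+2 * G * y.+2)) h2.
have H4 := congr1 (fun z => z * (B * (L.+2 * G))) h4.
rewrite -!multE in H1 H2 H4 *. lia.
Qed.
Fixpoint ch (G : seq bool -> nat) (h : seq bool) : nat :=
  match h with
  | [::] => 0
  | b :: t => (if b then 0 else G (true :: t)) + ch (fun t' => G (b :: t')) t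
  end.

Fixpoint ff (p : seq nat) (h : seq bool) : nat :=
  match p with
  | [::] => 1
  | r' :: p' =>
    (count id h).+1 * ((count id (behead h)).+1 == r') * ff p' (behead h)
    + ch (fun h' => ((count id (behead h')).+1 == r') * ff p' (behead h')) h
  end.

Fixpoint blists (L : nat) : seq (seq bool) :=
  if L is L'.+1 then map (cons false) (blists L') ++ map (cons true) (blists L')
  else [:: [::]].

Lemma sum_blS L (P : pred (seq bool)) (F : seq bool -> nat) :
  \sum_(h <- blists L.+1 | P h) F h =
  \sum_(t <- blists L | P (false :: t)) F (false :: t) +
  \sum_(t <- blists L | P (true :: t)) F (true :: t).
Proof. by rewrite /= big_cat !big_map. Qed.

Lemma sum_blS_cnt L x (F : seq bool -> nat) :
  \sum_(h <- blists L.+1 | count id h == x) F h =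
  \sum_(t <- blists L | count id t == x) F (false :: t) +
  \sum_(t <- blists L | (count id t).+1 == x) F (true :: t).
Proof. by rewrite sum_blS. Qed.

Lemma ch_regroup L x G :
  \sum_(h <- blists L | count id h == x) ch G h =
  x.+1 * \sum_(h <- blists L | count id h == x.+1) G h.
Proof.
elim: L x G => [|L IH] x G.
  by rewrite !big_cons !big_nil /=; case: (0 == x); rewrite ?muln0.
rewrite !sum_blS_cnt /=.
rewrite big_split /= IH.
under [X in _ + X = _]eq_bigr do rewrite add0n.
case: x => [|y].
  rewrite [X in _ + X = _]big_pred0 // addn0 !mul1n.
  by rewrite addnC; congr (_ + _).
have E1 : \sum_(i <- blists L | (count id i).+1 == y.+1) ch (fun t' => G (true :: t')) i
   = \sum_(i <- blists L | count id i == y) ch (fun t' => G (true :: t')) i.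
  by apply: eq_bigl => t.
have E2 : \sum_(t <- blists L | (count id t).+1 == y.+2) G (true :: t)
   = \sum_(t <- blists L | count id t == y.+1) G (true :: t).
  by apply: eq_bigl => t.
rewrite E1 E2 IH mulnDr.
set A := \sum_(_ <- _ | _) G (true :: _).
set B := \sum_(_ <- _ | _) G (false :: _).
by rewrite [A + _]addnC -addnA -mulSn.
Qed.

Definition SS L x p := \sum_(h <- blists L | count id h == x) ff p h.

Lemma ff_cons r p h : ff (r :: p) h =
    (count id h).+1 * ((count id (behead h)).+1 == r) * ff p (behead h)
    + ch (fun h' => ((count id (behead h')).+1 == r) * ff p (behead h')) h.
Proof. by []. Qed.

Lemma SS_step L x r p : SS L.+1 x (r :: p) =
  x.+1 * ((x.+1 == r) * SS L x p + (if x is y.+1 then (x == r) * SS L y p else 0)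
          + ((x.+2 == r) * SS L x.+1 p + (x.+1 == r) * SS L x p)).
Proof.
rewrite /SS.
under eq_bigr do rewrite ff_cons.
rewrite big_split /= -/(blists L.+1) ch_regroup.
rewrite (eq_bigr (fun h => x.+1 * (((count id (behead h)).+1 == r) * ff p (behead h)))); last first.
  by move=> h /eqP ->; rewrite mulnA.
rewrite -big_distrr /= -mulnDr; congr (_ * _).
rewrite !sum_blS_cnt /=.
congr (_ + _); congr (_ + _).
- rewrite big_distrr /=; apply: eq_bigr => t /eqP -> //.
- case: x => [|y]; first by rewrite big_pred0.
  rewrite big_distrr /=; rewrite (eq_bigl (fun t => count id t == y)) //.
  by apply: eq_bigr => t /eqP ->.
- rewrite big_distrr /=; apply: eq_bigr => t /eqP -> //.
- rewrite big_distrr /=; rewrite (eq_bigl (fun t => count id t == x)) //.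
  by apply: eq_bigr => t /eqP ->.
Qed.


Local Open Scope ring_scope.

Lemma scal (a b c d : nat) (P : rat) : (0 < d)%N -> (a * d = b * c)%N ->
  a%:R * P = b%:R * (c%:R / d%:R * P).
Proof.
move=> d0 E; rewrite mulrA; congr (_ * _).
by rewrite mulrA -natrM -E natrM mulfK // pnatr_eq0 -lt0n.
Qed.

Lemma neqS x : (x == x.+1) = false.
Proof. by elim: x. Qed.

Lemma lemC p x : ((SS (size p) x p)%:R : rat) =
  ('C(size p, x) * (size p).+1`!)%:R * urn_path_prob (size p).+1 x.+1 p.
Proof.
elim: p x => [|r p IH] x.
  rewrite /SS /= big_cons big_nil.
  by case: x.
rewrite [size _]/= SS_step [urn_path_prob _ _ _]/=.
set L := size p in IH *.
case: (ltngtP r x.+1) => [rlt|rgt|->].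
- case: x rlt IH => [|y] rlt IH.
    have -> : r = 0%N by case: r rlt.
    by rewrite /urn_step /= (@bin_small 1 2) // !mul0n /= !mul0r mulr0.
  case: (ltngtP r y.+1) => [rlt2|rgt2|->]; last first.
  + rewrite (_ : (y.+3 == y.+1) = false); last by elim: y {rlt IH}.
    rewrite !mul0n add0n !addn0.
    rewrite /urn_step (_ : (y.+3 - y.+1 = 2)%N); last by rewrite !subSS -addn2 addKn.
    rewrite leqnn andbT (_ : (y.+1 <= y.+3)%N); last by apply: leq_trans (leqnSn _) (leqnSn _).
    rewrite mul1n [(y.+2 * _)%:R]natrM IH mulrA -natrM.
    apply: scal; first by rewrite bin_gt0.
    exact: id3.
  + by move: rlt; rewrite ltnS leqNgt rgt2.
  + have -> : urn_step L.+2 y.+2 r = 0.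
      rewrite /urn_step leq_subLR (_ : (y.+3 <= r + 2)%N = false) ?andbF //.
      by apply/negbTE; rewrite -ltnNge addn2 ltnS ltnS.
    rewrite mul0r mulr0.
    have e1 : (y.+2 == r) = false by apply/negbTE; rewrite neq_ltn ltnS (ltnW rlt2) orbT.
    have e2 : (y.+1 == r) = false by apply/negbTE; rewrite neq_ltn rlt2 orbT.
    have e3 : (y.+3 == r) = false by apply/negbTE; rewrite neq_ltn (ltn_trans rlt2 (ltn_trans (ltnSn _) (ltnSn _))) orbT.
    by rewrite e3 !mul0n !addn0 muln0.
- case: (ltngtP r x.+2) => [rlt2|rgt2|->].
  + by move: rlt2; rewrite ltnNge rgt.
  + have -> : urn_step L.+2 x.+1 r = 0.
      by rewrite /urn_step leqNgt rgt2.
    rewrite mul0r mulr0.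
    have e1 : (x.+1 == r) = false by apply/negbTE; rewrite neq_ltn rgt.
    have e2 : (x.+2 == r) = false by apply/negbTE; rewrite neq_ltn rgt2.
    have e3 : (x == r) = false by apply/negbTE; rewrite neq_ltn (ltnW rgt).
    case: x {IH rgt rgt2} e1 e2 e3 => [|y] e1 e2 e3; by rewrite ?e1 ?e2 ?e3 !mul0n !addn0 muln0.
  + have -> : (if x is y.+1 then ((x == x.+2) * SS L y p)%N else 0%N) = 0%N.
      by clear IH rgt; case: x => // y; rewrite (_ : (y.+1 == y.+3) = false) //; elim: y.
    rewrite !mul0n add0n addn0 mul1n.
    rewrite /urn_step subnn leqnn /=.
    rewrite [(x.+1 * _)%:R]natrM IH mulrA -natrM.
    apply: scal; first by rewrite bin_gt0.
    exact: id1.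
- have -> : (if x is y.+1 then ((x == x.+1) * SS L y p)%N else 0%N) = 0%N.
    by clear IH; case: x => // y; rewrite neqS.
  rewrite (_ : (x.+2 == x.+1) = false); last by elim: x {IH}.
  rewrite !mul0n add0n addn0 mul1n addnn -muln2.
  rewrite /urn_step subSn // subnn leqnSn /=.
  rewrite [(SS L x p * 2)%N]mulnC mulnA.
  rewrite [(x.+1 * 2 * _)%:R]natrM IH mulrA -natrM.
  apply: scal; first by rewrite bin_gt0.
  exact: id2.
Qed.
Local Close Scope ring_scope.

Lemma count_sym (s t : seq nat) : uniq s -> uniq t ->
  count (mem t) s = count (mem s) t.
Proof.
move=> us ut; rewrite -!size_filter; apply: perm_size.
apply: uniq_perm; rewrite ?filter_uniq // => w.
by rewrite !mem_filter andbC.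
Qed.

Lemma X_to_h m i (s : seq nat) : uniq s -> all (fun w => w < m) s ->
  count (fun w => i < w) s = count id [seq k \in s | k <- iota i.+1 (m - i.+1)].
Proof.
move=> us /allP sm; rewrite count_map (eq_count (a2 := mem s)) //.
rewrite -count_sym ?iota_uniq //; apply: eq_in_count => w /sm wm.
have -> : mem (iota i.+1 (m - i.+1)) w = (w \in iota i.+1 (m - i.+1)) by [].
rewrite mem_iota; case: (leqP i.+1 m) => him.
  by rewrite subnKC // wm andbT.
rewrite (_ : i < w = false) ?andbF //; apply/negbTE; rewrite -leqNgt.
by apply: leq_trans (ltnW wm) _; rewrite -ltnS.
Qed.

Definition hfl m (s : seq nat) := [seq k \in s | k <- iota (size s).+1 (m - (size s).+1)].

Lemma low_count m (s : seq nat) : uniq s -> all (fun w => w < m) s -> size s < m ->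
  count (fun k => k \notin s) (iota 0 (size s).+1) = (count id (hfl m s)).+1.
Proof.
move=> us sm ltm.
have h1 := count_predC (mem s) (iota 0 (size s).+1).
have h2 := count_predC (fun w => size s < w) s.
have h3 : count (mem s) (iota 0 (size s).+1) = count (predC (fun w => size s < w)) s.
  rewrite -count_sym ?iota_uniq //; apply: eq_count => w.
  have -> : mem (iota 0 (size s).+1) w = (w \in iota 0 (size s).+1) by [].
  by rewrite mem_iota /= -leqNgt ltnS.
rewrite /hfl -X_to_h //.
have h4 := count_size (fun w => size s < w) s.
rewrite size_iota in h1.
rewrite (eq_count (a2 := predC (mem s))) //.
rewrite h3 in h1. clear -h1 h2. move: h1 h2. set A := count (predC (mem s)) _. set B := count (predC _) s. set C := count _ s. intros. clearbody A B C. rewrite -!plusE in h1 h2. lia.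
Qed.

Lemma ch_iota a L (S : seq nat) (G : seq bool -> nat) :
  \sum_(k <- iota a L | k \notin S) G [seq w \in k :: S | w <- iota a L] =
  ch G [seq w \in S | w <- iota a L].
Proof.
elim: L a G => [|L IH] a G; first by rewrite big_nil.
rewrite /= big_cons /= mem_head.
have e1 : [seq w \in a :: S | w <- iota a.+1 L] = [seq w \in S | w <- iota a.+1 L].
  apply/eq_in_map => w; rewrite mem_iota in_cons => /andP [h _].
  by rewrite (_ : (w == a) = false) //; apply/negbTE; rewrite neq_ltn h orbT.
have e2 : \sum_(j <- iota a.+1 L | j \notin S)
      G ((a \in j :: S) :: [seq w \in j :: S | w <- iota a.+1 L]) =
   \sum_(j <- iota a.+1 L | j \notin S)
      G ((a \in S) :: [seq w \in j :: S | w <- iota a.+1 L]).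
  rewrite big_seq_cond [RHS]big_seq_cond; apply: eq_bigr => k /andP [kin _].
  rewrite in_cons (_ : (a == k) = false) //.
  by apply/negbTE; rewrite neq_ltn; move: kin; rewrite mem_iota => /andP [-> _].
rewrite e1 e2 (IH a.+1 (fun t => G ((a \in S) :: t))).
by case: (a \in S).
Qed.
Definition pre m (pi : {perm 'I_m}) (s : seq nat) :=
  [forall a : 'I_m, (a < size s) ==> (val (pi a) == nth 0 s a)].

Definition Xc m (pi : {perm 'I_m}) (j : nat) :=
  #|[pred a : 'I_m | (a < j) && (j < pi a)]|.

Lemma card_ord_count m k (Q : pred nat) : k <= m ->
  #|[pred a : 'I_m | (a < k) && Q a]| = count Q (iota 0 k).
Proof.
move=> km; rewrite -sum1_card.
rewrite (eq_bigl (fun a : 'I_m => (a < k) && Q a)) //.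
rewrite -(big_mkord (fun a => (a < k) && Q a) (fun _ => 1)) sum1_count /index_iota subn0.
rewrite -(subnKC km) iotaD count_cat add0n.
rewrite (eq_in_count (a1 := fun a => (a < k) && Q a) (a2 := Q) (s := iota 0 k)); last first.
  by move=> a; rewrite mem_iota add0n => /andP [_ ->].
rewrite (eq_in_count (a1 := fun a => (a < k) && Q a) (a2 := pred0)); last first.
  by move=> a; rewrite mem_iota => /andP [h _]; rewrite ltnNge h.
by rewrite count_pred0 addn0.
Qed.

Lemma Xc_pre m (pi : {perm 'I_m}) (t : seq nat) : pre pi t -> size t <= m ->
  Xc pi (size t) = count (fun w => size t < w) t.
Proof.
move=> /forallP H tm; rewrite /Xc.
rewrite (eq_card (B := [pred a : 'I_m | (a < size t) && (size t < nth 0 t a)])); last first.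
  move=> a; rewrite !inE; case ha: (a < size t) => //=.
  by have := H a; rewrite ha => /eqP ->.
rewrite (@card_ord_count m (size t) (fun a => size t < nth 0 t a) tm).
have E : count (fun w => size t < w) t = count (fun w => size t < w) (map (nth 0 t) (iota 0 (size t))).
  by rewrite -/(mkseq _ _) mkseq_nth.
by rewrite E count_map.
Qed.

Lemma pre_rcons m (pi : {perm 'I_m}) s v (h : size s < m) :
  pre pi (rcons s v) = pre pi s && (val (pi (Ordinal h)) == v).
Proof.
apply/idP/idP.
  move/forallP => H; apply/andP; split.
    apply/forallP => a; apply/implyP => ha.
    by have := H a; rewrite size_rcons nth_rcons ha ltnS (ltnW ha).
  by have := H (Ordinal h); rewrite /= nth_rcons ltnn eqxx size_rcons ltnSn.
move=> /andP [/forallP H1 /eqP H2]; apply/forallP => a; apply/implyP.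
rewrite size_rcons ltnS leq_eqVlt => /orP [/eqP ea | la].
  have -> : a = Ordinal h by apply: val_inj.
  by rewrite nth_rcons /= ltnn eqxx H2.
by have := H1 a; rewrite la nth_rcons la.
Qed.

Lemma pre_full m (t : seq nat) : uniq t -> size t = m -> all (fun w => w < m) t ->
  #|[pred pi : {perm 'I_m} | pre pi t]| = 1.
Proof.
move=> ut st /allP tm.
pose f := fun a : 'I_m => insubd a (nth 0 t a).
have fv : forall a, val (f a) = nth 0 t a.
  move=> a; rewrite /f val_insubd tm //; apply: mem_nth; by rewrite st.
have fI : injective f.
  move=> a b /(congr1 val); rewrite !fv => /eqP.
  by rewrite nth_uniq ?st // => /eqP /val_inj.
rewrite (eq_card (B := pred1 (perm fI))) ?card1 //.
move=> pi; rewrite !inE; apply/idP/idP.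
  move/forallP => H; apply/eqP/permP => a; rewrite permE; apply: val_inj.
  by rewrite fv; have := H a; rewrite st ltn_ord => /eqP.
move/eqP ->; apply/forallP => a; apply/implyP => _.
by rewrite permE fv.
Qed.

Lemma E_split m (C : pred {perm 'I_m}) (s : seq nat) (h : size s < m) :
  #|[pred pi | pre pi s && C pi]| =
  \sum_(k <- iota 0 m | k \notin s) #|[pred pi | pre pi (rcons s k) && C pi]|.
Proof.
rewrite -sum1_card (partition_big (fun pi : {perm 'I_m} => pi (Ordinal h)) predT) //=.
transitivity (\sum_(v : 'I_m) (if val v \notin s then
    #|[pred pi | pre pi (rcons s v) && C pi]| else 0)).
  apply: eq_bigr => v _.
  case: ifP => vs.
    rewrite -sum1_card; apply: eq_bigl => pi; rewrite !inE pre_rcons.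
    by rewrite -val_eqE /= andbAC.
  rewrite big_pred0 // => pi; rewrite !inE.
  apply/negbTE; apply/negP => /andP [/andP [/forallP H _] /eqP piv].
  move/negbFE: vs => vs.
  have iv : index (val v) s < size s by rewrite index_mem.
  have ia : index (val v) s < m := ltn_trans iv h.
  have /eqP e := implyP (H (Ordinal ia)) iv.
  rewrite nth_index // in e.
  have : pi (Ordinal ia) = pi (Ordinal h) by apply: val_inj; rewrite e piv.
  move/perm_inj/(congr1 val) => /= eia.
  by move: vs; rewrite -index_mem eia ltnn.
rewrite [RHS]big_mkcond /=.
have -> : iota 0 m = index_iota 0 m by rewrite /index_iota subn0.
by rewrite big_mkord.
Qed.

Definition condp m (uf : nat -> nat) (pi : {perm 'I_m}) (j : 'I_m) := (Xc pi j).+1 == uf j.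
Definition Cf m (uf : nat -> nat) (i : nat) (pi : {perm 'I_m}) :=
  [forall j : 'I_m, (i < j) ==> condp uf pi j].
Definition E' m uf (s : seq nat) :=
  #|[pred pi : {perm 'I_m} | pre pi s && Cf uf (size s) pi]|.
Definition upath (m : nat) (uf : nat -> nat) i := [seq uf k | k <- iota i (m - i)].

Lemma Cf_step m uf i (pi : {perm 'I_m}) (h : i.+1 < m) :
  Cf uf i pi = condp uf pi (Ordinal h) && Cf uf i.+1 pi.
Proof.
apply/idP/idP.
  move/forallP => H; apply/andP; split.
    by have := H (Ordinal h); rewrite /= ltnSn.
  apply/forallP => j; apply/implyP => hj.
  by have := H j; rewrite (ltnW hj).
move=> /andP [c /forallP H]; apply/forallP => j; apply/implyP.
rewrite leq_eqVlt => /orP [/eqP ej | lj].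
  by have -> : j = Ordinal h by apply: val_inj.
by have := H j; rewrite lj.
Qed.

Lemma Cf_last m uf i (pi : {perm 'I_m}) : m = i.+1 -> Cf uf i pi.
Proof.
move=> e; apply/forallP => j; apply/implyP => hj.
have jm : val j < i.+1 by rewrite -e ltn_ord.
by move: jm; rewrite ltnS leqNgt hj.
Qed.

Lemma mainA m uf (s : seq nat) : uniq s -> all (fun w => w < m) s -> size s < m ->
  E' m uf s = ff (upath m uf (size s).+1) (hfl m s).
Proof.
move e: (m - (size s).+1) => k.
elim: k s e => [|k IH] s e us sm sl.
  have em : m = (size s).+1 by apply/eqP; rewrite eqn_leq sl -subn_eq0 e.
  rewrite /E' (@E_split m (Cf uf (size s)) s sl).
  rewrite /upath /hfl e /= big_seq_cond.
  rewrite (eq_bigr (fun _ => 1)); last first.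
    move=> k /andP [kin ks].
    rewrite (eq_card (B := [pred pi | pre pi (rcons s k)])); last first.
      by move=> pi; rewrite !inE Cf_last ?andbT.
    apply: pre_full.
    - by rewrite rcons_uniq ks.
    - by rewrite size_rcons em.
    - by rewrite all_rcons sm andbT; move: kin; rewrite mem_iota.
  rewrite -big_seq_cond sum1_count.
  by rewrite {1}em (low_count us sm sl) /hfl e.
have hi : (size s).+1 < m by rewrite -subn_gt0 e.
have em : m = (size s).+1 + k.+1 by rewrite -e subnKC // ltnW.
have e2 : m - (size s).+2 = k by rewrite subnS e.
pose H := fun h => ((count id h).+1 == uf (size s).+1) * ff (upath m uf (size s).+2) h.
rewrite /E' (@E_split m (Cf uf (size s)) s sl) big_seq_cond.
rewrite (eq_bigr (fun k' => H (hfl m (rcons s k')))); last first.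
  move=> k' /andP [kin ks].
  have km : k' < m by move: kin; rewrite mem_iota.
  have us' : uniq (rcons s k') by rewrite rcons_uniq ks.
  have sm' : all (fun w => w < m) (rcons s k') by rewrite all_rcons sm km.
  have sl' : size (rcons s k') < m by rewrite size_rcons.
  rewrite (eq_card (B := [pred pi | ((count (fun w => (size s).+1 < w) (rcons s k')).+1 == uf (size s).+1)
                                   && (pre pi (rcons s k') && Cf uf (size (rcons s k')) pi)])); last first.
    move=> pi; rewrite !inE (Cf_step _ _ hi) size_rcons.
    case pr: (pre pi (rcons s k')); rewrite ?andbF //=.
    rewrite /condp /= -(size_rcons s k') (Xc_pre pr) ?size_rcons //.
  rewrite /H /hfl size_rcons (@X_to_h m (size s).+1 _ us' sm').
  case: (_ == _); last by rewrite mul0n; apply: eq_card0 => pi; rewrite !inE.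
  rewrite mul1n (_ : #|_| = E' m uf (rcons s k')); last first.
    by apply: eq_card => pi; rewrite !inE size_rcons.
  by rewrite (IH (rcons s k')) // size_rcons // /hfl size_rcons.
rewrite -big_seq_cond.
have eu : upath m uf (size s).+1 = uf (size s).+1 :: upath m uf (size s).+2.
  by rewrite /upath e e2.
rewrite eu ff_cons.
rewrite {1}em iotaD big_cat /= add0n.
congr (_ + _).
  rewrite big_seq_cond (eq_bigr (fun _ => H (behead (hfl m s)))); last first.
    move=> k' /andP [kin _]; congr H.
    rewrite /hfl size_rcons e2 e /=.
    apply/eq_in_map => w; rewrite mem_iota => /andP [hw _].
    rewrite mem_rcons in_cons (_ : (w == k') = false) //.
    apply/negbTE; rewrite neq_ltn; apply/orP; right.
    move: kin; rewrite -[0 :: _]/(iota 0 (size s).+1) mem_iota ltnS => /andP [_ kl].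
    exact: leq_ltn_trans kl (ltnW hw).
  rewrite -big_seq_cond big_const_seq iter_addn_0 (low_count us sm sl).
  by rewrite /H mulnC mulnA.
rewrite big_seq_cond (eq_bigr (fun k' => H (behead [seq w \in k' :: s | w <- iota (size s).+1 k.+1]))); last first.
  move=> k' _; congr H.
  rewrite /hfl size_rcons e2 /=.
  by apply/eq_map => w; rewrite mem_rcons.
rewrite -[(size s).+1 :: iota (size s).+2 k]/(iota (size s).+1 k.+1) -big_seq_cond.
have Hc : \sum_(k' <- iota (size s).+1 k.+1 | k' \notin s)
    H (behead [seq w \in k' :: s | w <- iota (size s).+1 k.+1]) =
  ch (fun h => H (behead h)) [seq w \in s | w <- iota (size s).+1 k.+1].
  exact: (ch_iota (size s).+1 k.+1 s (fun h => H (behead h))).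
by rewrite Hc /hfl e.
Qed.
Lemma Xc_pair M (r s : {perm 'I_M}) (i : 'I_M) :
  #|[pred k : 'I_M | ((r k).+1 < i.+1 < (s k).+1)]| = Xc (r^-1 * s)%g i.
Proof.
rewrite /Xc -!sum1_card [RHS](reindex_inj (@perm_inj _ r)) /=.
apply: eq_bigl => k; rewrite !inE permM permK.
by rewrite !ltnS.
Qed.

Lemma pairs_card M (P : pred {perm 'I_M}) :
  #|[pred p : {perm 'I_M} * {perm 'I_M} | P (p.1^-1 * p.2)%g]| = M`! * #|P|.
Proof.
rewrite -!sum1_card big_mkcond /=.
rewrite -(pair_big predT predT (fun r s => if P (r^-1 * s)%g then 1 else 0)) /=.
rewrite (eq_bigr (fun _ => \sum_(pi in P) 1)); last first.
  move=> r _; rewrite [RHS]big_mkcond /=.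
  rewrite [RHS](reindex_inj (mulgI r^-1%g)) /=.
  by apply: eq_bigr => s _; rewrite unfold_in.
by rewrite sum_nat_const card_Sn mulnC.
Qed.

Lemma sum_zero L (F : seq bool -> nat) :
  \sum_(h <- blists L | count id h == 0) F h = F (nseq L false).
Proof.
elim: L F => [|L IH] F; first by rewrite big_cons big_nil /= addn0.
by rewrite sum_blS_cnt [X in _ + X]big_pred0 // addn0 (IH (fun t => F (false :: t))).
Qed.

Lemma SS_zero L p : SS L 0 p = ff p (nseq L false).
Proof. by rewrite /SS sum_zero. Qed.

Lemma hfl_nil m : hfl m [::] = nseq m.-1 false.
Proof.
rewrite /hfl /= subn1; elim: m.-1 1 => [|L IH] a //=.
by rewrite IH.
Qed.

Lemma forall_split m (Q : 'I_m.+1 -> bool) :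
  [forall j, Q j] = Q ord0 && [forall j : 'I_m.+1, (0 < j) ==> Q j].
Proof.
apply/idP/idP.
  move/forallP => H; rewrite H; apply/forallP => j; by rewrite H implybT.
move=> /andP [H0 /forallP H]; apply/forallP => j.
case: (posnP j) => [j0|jp]; last by have := H j; rewrite jp.
by have -> : j = ord0 by apply: val_inj.
Qed.

Lemma Xc0 m (pi : {perm 'I_m}) : Xc pi 0 = 0.
Proof. by apply: eq_card0 => a; rewrite !inE ltn0. Qed.

Lemma pre_nil m (pi : {perm 'I_m}) : pre pi [::].
Proof. by apply/forallP => a; rewrite ltn0. Qed.

Lemma size_upath m uf : size (upath m.+1 uf 1) = m.
Proof. by rewrite size_map size_iota subSS subn0. Qed.

Theorem corollary8 (n : nat) (hn : (2 <= n)%N) (u : 'I_(n.-1) -> nat) :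
  urn_law n u = perm_law n u.
Proof.
case: n hn u => [|[|m]] // _ u.
pose uf k := nth 0 [seq u j | j <- enum 'I_m.+1] k.
have hu : forall j : 'I_m.+1, u j = uf j.
  by move=> j; rewrite /uf (nth_map j) ?size_enum_ord // nth_ord_enum.
have hmap : [seq u i | i <- enum 'I_m.+1] = uf 0 :: upath m.+1 uf 1.
  rewrite (eq_map hu).
  rewrite (map_comp uf val) val_enum_ord /upath subSS subn0 //.
rewrite /urn_law /perm_law /= hmap /=.
pose P := [pred pi : {perm 'I_m.+1} | [forall j : 'I_m.+1, (Xc pi j).+1 == uf j]].
rewrite (eq_card (B := [pred p : {perm 'I_m.+1} * {perm 'I_m.+1} | P (p.1^-1 * p.2)%g])); last first.
  move=> p; rewrite !inE; apply: eq_forallb => i.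
  have e : forall x : nat, (x + 1)%R = x.+1 := fun x => addn1 x.
  by rewrite Xc_pair e hu.
rewrite pairs_card card_prod card_Sn.
have eP : #|P| = ((1 == uf 0) * E' m.+1 uf [::])%N.
  rewrite /E' /=.
  case h1 : (1 == uf 0).
    rewrite mul1n; apply: eq_card => pi; rewrite !inE forall_split /=.
    rewrite Xc0 -(eqP h1) eqxx pre_nil.
    by [].
  rewrite mul0n; apply: eq_card0 => pi; rewrite !inE forall_split /=.
  by rewrite Xc0 h1.
have hE := @mainA m.+1 uf [::] isT isT isT.
rewrite eP hE hfl_nil /= -SS_zero.
have := lemC (upath m.+1 uf 1) 0; rewrite size_upath => hC.
have F0 : ((m.+1`!)%:R != 0 :> rat)%R by rewrite pnatr_eq0 -lt0n fact_gt0.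
case h1 : (1 == uf 0).
  rewrite -(eqP h1) mul1n natrM hC bin0 mul1n natrM mulrA -natrM.
  rewrite [RHS]mulrAC divff ?mul1r; last by rewrite natrM mulf_neq0.
  rewrite /urn_step /= subnn !subn0 bin0 mul1n divff ?mul1r //.
  by rewrite pnatr_eq0 -lt0n bin_gt0.
rewrite mul0n muln0 mul0r.
rewrite /urn_step.
case: (uf 0) h1 => [|[|r]] //= _.
  by rewrite mul0n !mul0r.
by rewrite mul0r.
Qed.
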